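(* For each fixed $d\in\mathbb{N}$, collinearity of three $d$-dimensional points with $n$-bit natural-number coordinates can be maintained in $\mathrm{DynFO}{+}\mathrm{ar}$ under changes of single bits.
   Context: Input: three points $p_1,p_2,p_3\in\mathbb{N}^d$ whose coordinates are $n$-bit numbers, encoded over a domain $[n]$ by relations recording which bits of which coordinates are $1$; a change flips a single bit of a single coordinate. The Boolean query asks whether $p_1,p_2,p_3$ lie on a common line. $\mathrm{FO}{+}\mathrm{ar}$: first-order logic with access to a linear order and compatible addition and multiplication on the domain, order-invariant. A query is in $\mathrm{DynFO}{+}\mathrm{ar}$ under a set of changes if there is a dynamic program, with auxiliary relations over the fixed domain and one $\mathrm{FO}{+}\mathrm{ar}$ update formula per change operation and auxiliary relation (evaluated on the old input and auxiliary structure, with the change parameters as free variables), which, starting from the empty input (all bits $0$) with empty auxiliary relations, has after every sequence of changes a query relation equal to the query answer on the current input. *)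

(* Defs.v *)
From mathcomp Require Import all_boot all_order all_algebra.
Import GRing.Theory Num.Theory.

(* First-order logic with built-in arithmetic FO+ar over the domain    *)
(* [n] = {0,...,n-1}: equality, the natural linear order <, and the    *)
(* (partial, i.e. restricted to the domain) addition and               *)
(* multiplication relations x + y = z, x * y = z.                      *)
(* Variables are de Bruijn indices; FEx binds variable 0.              *)
Inductive fo (S : Type) : Type :=
| FTrue
| FEq  of nat & nat
| FLt  of nat & nat
| FAdd of nat & nat & nat
| FMul of nat & nat & nat
| FRel of S & seq nat
| FNot of fo S
| FAnd of fo S & fo S
| FEx  of fo S.

Arguments FTrue {S}.
Arguments FRel {S}.
Arguments FNot {S}.
Arguments FAnd {S}.
Arguments FEx {S}.
Arguments FEq {S}.
Arguments FLt {S}.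
Arguments FAdd {S}.
Arguments FMul {S}.

Fixpoint holds (S : Type) (n : nat) (I : S -> seq nat -> bool)
    (env : nat -> nat) (f : fo S) : bool :=
  match f with
  | FTrue => true
  | FEq x y => env x == env y
  | FLt x y => env x < env y
  | FAdd x y z => env x + env y == env z
  | FMul x y z => env x * env y == env z
  | FRel s xs => I s (map env xs)
  | FNot g => ~~ holds S n I env g
  | FAnd g h => holds S n I env g && holds S n I env h
  | FEx g => [exists i : 'I_n,
               holds S n I (fun v => if v is v'.+1 then env v' else nat_of_ord i) g]
  end.

(* Input: three points in N^d; for point i : 'I_3 and coordinate       *)
(* j : 'I_d, a unary relation (over [n]) of the positions of the 1-bits *)
(* of that n-bit coordinate.                                            *)
Definition input (d : nat) := 'I_3 -> 'I_d -> nat -> bool.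

Definition coord (d n : nat) (inp : input d) (i : 'I_3) (j : 'I_d) : nat :=
  \sum_(k < n) (inp i j k) * 2 ^ k.

Definition change (d : nat) := ('I_3 * 'I_d * nat)%type.

Definition flip (d : nat) (c : change d) (inp : input d) : input d :=
  fun i j k =>
    if (i == c.1.1) && (j == c.1.2) && (k == c.2) then ~~ inp i j k
    else inp i j k.

Definition collinear (d : nat) (p : 'I_3 -> 'I_d -> rat) : Prop :=
  exists (a v : 'I_d -> rat),
    (exists j, v j != 0)%R /\
    forall i : 'I_3, exists t : rat, forall j : 'I_d, (p i j = a j + t * v j)%R.

Definition points (d n : nat) (inp : input d) : 'I_3 -> 'I_d -> rat :=
  fun i j => ((coord d n inp i j)%:R)%R.

(* Dynamic programs. Symbols available to update formulas: the 3d input *)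
(* relations (inl (i,j)) and the K auxiliary relations (inr r).         *)
(* For each change operation "flip a bit of coordinate j of point i"   *)
(* and each auxiliary relation r of arity ar r, an update formula whose *)
(* free variable 0 is the change parameter (the bit position) and whose *)
(* free variables 1..ar r are the tuple components.  The query relation *)
Record dynprog (d : nat) : Type := DynProg {
  dp_K   : nat;
  dp_ar  : 'I_dp_K -> nat;
  dp_q   : 'I_dp_K;
  dp_q0  : dp_ar dp_q = 0;
  dp_upd : 'I_3 -> 'I_d -> 'I_dp_K -> fo (('I_3 * 'I_d) + 'I_dp_K)
}.

Record state (d K : nat) : Type := State {
  st_inp : input d;
  st_aux : 'I_K -> seq nat -> bool
}.

Definition interp (d K : nat) (st : state d K) :
    ('I_3 * 'I_d) + 'I_K -> seq nat -> bool :=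
  fun s xs =>
    match s with
    | inl ij => if xs is [:: a] then st_inp d K st ij.1 ij.2 a else false
    | inr r => st_aux d K st r xs
    end.

Definition init_state (d K : nat) : state d K :=
  State d K (fun _ _ _ => false) (fun _ _ => false).

(* one step: update formulas are evaluated on the OLD input and auxiliary *)
(* structure; the new relations consist of the tuples over [n] of the    *)
(* right arity satisfying the update formula.                            *)
Definition step (d : nat) (P : dynprog d) (n : nat)
    (st : state d (dp_K d P)) (c : change d) : state d (dp_K d P) :=
  State d (dp_K d P) (flip d c (st_inp d (dp_K d P) st))
        (fun r t => [&& size t == @dp_ar d P r, all (fun a => a < n) t &
                     holds _ n (interp d (dp_K d P) st) (fun v => nth 0 (c.2 :: t) v)
                           (@dp_upd d P c.1.1 c.1.2 r)]).

Definition run (d : nat) (P : dynprog d) (n : nat) (cs : seq (change d)) :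
    state d (dp_K d P) :=
  foldl (step d P n) (init_state d (dp_K d P)) cs.

Definition query_answer (d : nat) (P : dynprog d) (st : state d (dp_K d P)) : bool :=
  st_aux d (dp_K d P) st (dp_q d P) [::].

Definition maintains_collinearity (d : nat) (P : dynprog d) : Prop :=
  forall (n : nat) (cs : seq (change d)),
    cs != [::] ->
    all (fun c : change d => c.2 < n) cs ->
    query_answer d P (run d P n cs) <->
    collinear d (points d n (st_inp d (dp_K d P) (run d P n cs))).

(* Main.v *)
Require Import Defs.
From mathcomp Require Import all_boot all_order all_algebra.
From mathcomp Require Import zify ring.

Definition bitn (Z P : nat) : bool := odd (Z %/ 2 ^ P).

Lemma bitn_small Z P : Z < 2^P -> bitn Z P = false.
Proof. by move=> h; rewrite /bitn divn_small. Qed.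

Lemma bitn0 P : bitn 0 P = false.
Proof. by rewrite /bitn div0n. Qed.

Definition cbit X Y P := 2^P <= X %% 2^P + Y %% 2^P.

Lemma divmod_small_sum r1 r2 D : 0 < D -> r1 < D -> r2 < D ->
  (r1 + r2) %/ D = (D <= r1 + r2).
Proof.
move=> D0 h1 h2; case: leqP => h.
- have -> : r1 + r2 = 1 * D + (r1 + r2 - D) by lia.
  rewrite divnMDl // divn_small //; lia.
- by rewrite divn_small.
Qed.

Lemma bitnD X Y P : bitn (X + Y) P = bitn X P (+) bitn Y P (+) cbit X Y P.
Proof.
rewrite /bitn /cbit.
have D0 : 0 < 2^P by rewrite expn_gt0.
rewrite {1}(divn_eq X (2^P)) {1}(divn_eq Y (2^P)).
have -> : X %/ 2 ^ P * 2 ^ P + X %% 2 ^ P + (Y %/ 2 ^ P * 2 ^ P + Y %% 2 ^ P)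
   = (X %/ 2 ^ P + Y %/ 2^P) * 2 ^ P + (X %% 2 ^ P + Y %% 2 ^ P) by ring.
rewrite divnMDl // divmod_small_sum ?ltn_pmod // !oddD.
by case: (_ <= _).
Qed.

Lemma modn_pow2S X P : X %% 2^P.+1 = bitn X P * 2^P + X %% 2^P.
Proof.
have D0 : 0 < 2^P by rewrite expn_gt0.
rewrite /bitn {1}(divn_eq X (2^P)) {1}(divn_eq (X %/ 2^P) 2).
have -> : ((X %/ 2 ^ P) %/ 2 * 2 + (X %/ 2 ^ P) %% 2) * 2 ^ P + X %% 2 ^ P
  = (X %/ 2 ^ P) %/ 2 * 2^P.+1 + ((X %/ 2 ^ P) %% 2 * 2 ^ P + X %% 2 ^ P)
  by rewrite expnS; ring.
rewrite modnMDl modn_small ?modn2 //.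
have := ltn_pmod X D0; have : (X %/ 2 ^ P) %% 2 < 2 by rewrite ltn_pmod.
rewrite expnS; case: (_ %% 2) => [|[|]] //= _; lia.
Qed.

Lemma cbitS X Y P : cbit X Y P.+1 = (2 <= bitn X P + bitn Y P + cbit X Y P).
Proof.
rewrite /cbit !modn_pow2S.
have D0 : 0 < 2^P by rewrite expn_gt0.
have h1 := ltn_pmod X D0; have h2 := ltn_pmod Y D0.
rewrite expnS.
case: (bitn X P); case: (bitn Y P); case: leqP => h /=; lia.
Qed.

Lemma cbitP X Y P : cbit X Y P <-> exists Q, [/\ Q < P, bitn X Q, bitn Y Q &
   forall R, Q < R -> R < P -> bitn X R || bitn Y R].
Proof.
elim: P => [|P IH].
  by rewrite /cbit expn0 !modn1; split => // -[Q []].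
rewrite cbitS; split.
- case bx: (bitn X P); case by_: (bitn Y P) => /=.
  + move=> _; exists P; split => // R h1 h2; lia.
  + case c: (cbit X Y P) => // _. have [Q [q1 q2 q3 q4]] := proj1 IH c.
    exists Q; split => //; first lia. move=> R r1 r2.
    have [->|ne] := eqVneq R P; first by rewrite bx.
    apply: q4 => //; lia.
  + case c: (cbit X Y P) => // _. have [Q [q1 q2 q3 q4]] := proj1 IH c.
    exists Q; split => //; first lia. move=> R r1 r2.
    have [->|ne] := eqVneq R P; first by rewrite by_ orbT.
    apply: q4 => //; lia.
  + case c: (cbit X Y P) => //.
- move=> [Q [q1 q2 q3 q4]].
  have [EQ|ne] := eqVneq Q P.
    by subst Q; rewrite q2 q3.
  have c : cbit X Y P.
    apply/IH; exists Q; split => //; first lia.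
    move=> R r1 r2; apply: q4 => //; lia.
  have := q4 P; rewrite c.
  case: (bitn X P); case: (bitn Y P) => //= h; have := h (ltac:(lia)) (ltnSn P) => //.
Qed.

Lemma bitn_compl M Z P : Z < 2^M -> P < M -> bitn (2^M - 1 - Z) P = ~~ bitn Z P.
Proof.
move=> hZ hP; rewrite /bitn.
have D0 : 0 < 2^P by rewrite expn_gt0.
have EM : 2^M = 2^(M-P) * 2^P by rewrite -expnD subnK // ltnW.
have hq : Z %/ 2^P < 2^(M-P) by rewrite ltn_divLR // -EM.
have hr := ltn_pmod Z D0.
have -> : 2^M - 1 - Z = (2^(M-P) - 1 - Z %/ 2^P) * 2^P + (2^P - 1 - Z %% 2^P).
  rewrite {1}EM {1}(divn_eq Z (2^P)).
  rewrite !mulnBl mul1n. nia.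
rewrite divnMDl // (divn_small (_ : 2^P - 1 - Z %% 2^P < 2^P)); last lia.
rewrite addn0 -subnDA oddB; last lia.
rewrite oddX /= (_ : (M - P == 0) = false); last lia.
by rewrite add0n.
Qed.

Lemma bitn_inj M X Y : X < 2^M -> Y < 2^M ->
  (forall P, P < M -> bitn X P = bitn Y P) -> X = Y.
Proof.
elim: M X Y => [|M IH] X Y hX hY hb.
  rewrite expn0 in hX hY; lia.
have e0 := hb 0 (ltn0Sn _); rewrite /bitn !expn0 !divn1 in e0.
have eh : X./2 = Y./2.
  apply: IH.
  - rewrite -divn2 ltn_divLR // -expnSr; done.
  - rewrite -divn2 ltn_divLR // -expnSr; done.
  move=> P hP; have := hb P.+1 hP; rewrite /bitn !expnS -!divn2 !divnMA.
  by [].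
by rewrite -(odd_double_half X) -(odd_double_half Y) e0 eh.
Qed.

Lemma bitn_shift k Z P : bitn (2^k * Z) P = (k <= P) && bitn Z (P - k).
Proof.
rewrite /bitn; case: leqP => h.
- have -> : 2^P = 2^k * 2^(P-k) by rewrite -expnD subnKC.
  by rewrite divnMl // expn_gt0.
- have -> : 2^k * Z = 2^P * (2^(k-P) * Z) by rewrite mulnA -expnD subnKC // ltnW.
  rewrite mulKn ?expn_gt0 // oddM oddX /=.
  by rewrite (_ : (k - P == 0) = false) //; lia.
Qed.

Lemma sum_bits_lt (b : nat -> bool) n : \sum_(k < n) b k * 2^k < 2^n.
Proof.
elim: n => [|n IH]; first by rewrite big_ord0.
rewrite big_ord_recr /= expnS.
case: (b n) => /=; rewrite ?mul1n ?mul0n ?addn0 mul2n -addnn; first by rewrite ltn_add2r. by apply: (leq_trans IH); rewrite leq_addr.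
Qed.

Lemma bitn_sum (b : nat -> bool) n m :
  bitn (\sum_(k < n) b k * 2^k) m = (m < n) && b m.
Proof.
elim: n => [|n IH]; first by rewrite big_ord0 bitn0.
rewrite big_ord_recr /=.
have hs := sum_bits_lt b n.
set s := \sum_(k < n) _ in hs IH *.
case: (ltngtP m n) => h.
- rewrite ltnW //.
  rewrite /bitn.
  have -> : 2^n = 2^m * 2^(n-m) by rewrite -expnD subnKC // ltnW.
  rewrite (mulnC (2^m)) mulnA divnDMl ?expn_gt0 // oddD oddM oddX.
  rewrite (_ : (n - m == 0) = false) /=; last lia.
  rewrite andbF addbF; move: IH; rewrite /bitn => ->; by rewrite h.
- rewrite /bitn divn_small; first by rewrite ltnS leqNgt h.
  have : 2^n.+1 <= 2^m by rewrite leq_exp2l.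
  rewrite expnS; case: (b n) => /=; rewrite ?mul1n ?mul0n ?addn0 => h2; last by apply: leq_trans h2; apply: (leq_trans hs); rewrite leq_pmull. apply: (leq_trans _ h2); rewrite mul2n -addnn ltn_add2r //.
- subst m; rewrite ltnSn /bitn divnDMl ?expn_gt0 // divn_small //.
  by rewrite add0n; case: (b n).
Qed.

#[local] Hint Resolve ltn_ord : core.

Section FOLib.
Variables (S : Type) (n : nat) (I : S -> seq nat -> bool).
Local Notation hl := (holds S n I).

Definition ext (env : nat -> nat) (w : nat) : nat -> nat :=
  fun v => if v is v'.+1 then env v' else w.

Lemma hl_ex env f : hl env (FEx f) = [exists i : 'I_n, hl (ext env i) f].
Proof. by []. Qed.

Lemma hl_and env a b : hl env (FAnd a b) = hl env a && hl env b.
Proof. by []. Qed.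
Lemma hl_not env a : hl env (FNot a) = ~~ hl env a.
Proof. by []. Qed.

Lemma hl_exP env f : reflect (exists i : 'I_n, hl (ext env i) f) (hl env (FEx f)).
Proof. exact: existsP. Qed.

Definition FFalse : fo S := FNot FTrue.
Fact FOr_key : unit. Proof. by []. Qed.
Definition FOr (a b : fo S) := locked_with FOr_key (FNot (FAnd (FNot a) (FNot b))).
Definition FXor a b := FOr (FAnd a (FNot b)) (FAnd (FNot a) b).
Definition FIff a b := FNot (FXor a b).
Fact FAll_key : unit. Proof. by []. Qed.
Definition FAll f : fo S := locked_with FAll_key (FNot (FEx (FNot f))).

Lemma hl_or env a b : hl env (FOr a b) = hl env a || hl env b.
Proof. by rewrite /FOr locked_withE /= negb_and !negbK. Qed.
Lemma hl_xor env a b : hl env (FXor a b) = hl env a (+) hl env b.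
Proof. by rewrite /FXor hl_or /=; case: (hl env a); case: (hl env b). Qed.
Lemma hl_iff env a b : hl env (FIff a b) = (hl env a == hl env b).
Proof. rewrite /FIff /= hl_xor; by case: (hl env a); case: (hl env b). Qed.
Lemma hl_all env f : hl env (FAll f) = [forall i : 'I_n, hl (ext env i) f].
Proof. by rewrite /FAll locked_withE /= negb_exists; apply: eq_forallb => i; rewrite negbK. Qed.

Fixpoint FOrL (T : Type) (s : seq T) (f : T -> fo S) : fo S :=
  if s is x :: s' then FOr (f x) (FOrL T s' f) else FFalse.
Fixpoint FAndL (T : Type) (s : seq T) (f : T -> fo S) : fo S :=
  if s is x :: s' then FAnd (f x) (FAndL T s' f) else FTrue.
Arguments FOrL {T}. Arguments FAndL {T}.

Lemma hl_OrL T env (s : seq T) f : hl env (FOrL s f) = has (fun x => hl env (f x)) s.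
Proof. by elim: s => //= x s IH; rewrite hl_or IH. Qed.
Lemma hl_AndL T env (s : seq T) f : hl env (FAndL s f) = all (fun x => hl env (f x)) s.
Proof. by elim: s => //= x s IH; rewrite IH. Qed.

Definition FOr3 (f : 'I_3 -> fo S) := FOrL (enum 'I_3) f.
Lemma hl_Or3 env f : hl env (FOr3 f) = [exists h, hl env (f h)].
Proof.
rewrite /FOr3 hl_OrL; apply/hasP/existsP => [[h _ H]|[h H]]; first by exists h.
by exists h; rewrite ?mem_enum.
Qed.

Definition FLtPos (h1 : 'I_3) v1 (h2 : 'I_3) v2 : fo S :=
  if (h1 < h2)%N then FTrue else if h1 == h2 then FLt v1 v2 else FFalse.

Lemma hl_LtPos env (h1 h2 : 'I_3) v1 v2 : env v1 < n -> env v2 < n ->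
  hl env (FLtPos h1 v1 h2 v2) = (h1 * n + env v1 < h2 * n + env v2).
Proof.
move=> l1 l2; rewrite /FLtPos.
case: (ltngtP h1 h2) => H.
- have : (h1.+1 * n <= h2 * n) by rewrite leq_mul2r H orbT.
  rewrite mulSn => hh.
  suff hh2 : h1 * n + env v1 < h2 * n + env v2 by rewrite hh2.
  lia.
- have -> : (h1 == h2) = false by apply/negbTE; rewrite neq_ltn H orbT.
  have : (h2.+1 * n <= h1 * n) by rewrite leq_mul2r H orbT.
  rewrite mulSn => hh.
  suff hh2 : (h1 * n + env v1 < h2 * n + env v2) = false by rewrite hh2.
  apply/negbTE; rewrite -leqNgt; lia.
- have -> : h1 = h2 by apply: val_inj.
  by rewrite eqxx /= ltn_add2l.
Qed.

Lemma pos_decomp P : P < 3 * n -> exists (h : 'I_3) (p : 'I_n), P = h * n + p.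
Proof.
move=> hP; have n0 : 0 < n by lia.
have h3 : P %/ n < 3 by rewrite ltn_divLR // mulnC.
have hp : P %% n < n by rewrite ltn_pmod.
by exists (Ordinal h3), (Ordinal hp); rewrite /= -divn_eq.
Qed.

Variable k0 : nat.
Definition fam := 'I_3 -> nat -> nat -> fo S.
Definition fam_ok (X : fam) (xb : nat -> bool) :=
  forall (h : 'I_3) v s env, env s = k0 -> env v < n ->
    hl env (X h v s) = xb (h * n + env v).

Definition carryF (X Y : fam) (h : 'I_3) v s : fo S :=
 FOr3 (fun h1 => FEx (FAnd (FLtPos h1 0 h v.+1) (FAnd (X h1 0 s.+1) (FAnd (Y h1 0 s.+1)
    (FNot (FOr3 (fun h2 => FEx (FAnd (FLtPos h1 1 h2 0) (FAnd (FLtPos h2 0 h v.+2)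
          (FNot (FOr (X h2 0 s.+2) (Y h2 0 s.+2)))))))))))).

Lemma hl_carry X Y A B (h : 'I_3) v s env :
  fam_ok X (bitn A) -> fam_ok Y (bitn B) -> env s = k0 -> env v < n ->
  hl env (carryF X Y h v s) = cbit A B (h * n + env v).
Proof.
move=> hX hY es ev.
have hP : h * n + env v < 3 * n.
  have : h.+1 * n <= 3 * n by rewrite leq_mul2r ltn_ord orbT.
  rewrite mulSn; lia.
have e0 : forall e (i : 'I_n), ext e i 0 < n by move=> e i; exact: ltn_ord.
have e1 : forall e (i : 'I_n) j, ext e i j.+1 = e j by [].
apply/idP/idP.
- rewrite hl_Or3 => /existsP [h1] /hl_exP [i].
  rewrite !hl_and hl_not => /and4P [q1 q2 q3 q4].
  rewrite hl_LtPos //= in q1; rewrite hX //= in q2; rewrite hY //= in q3.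
  rewrite hl_Or3 in q4; move/existsP: q4 => q4.
  apply/cbitP; exists (h1 * n + i); split => // R r1 r2.
  have [h2 [i2 ER]] := pos_decomp _ (ltn_trans r2 hP).
  apply/negP => nb; apply: q4; exists h2; apply/hl_exP; exists i2.
  rewrite /= !hl_LtPos //= hl_or hX //= hY //= -ER r1 r2 /=.
  exact/negP.
- move/cbitP => [Q [q1 q2 q3 q4]].
  have [h1 [i EQ]] := pos_decomp _ (ltn_trans q1 hP).
  rewrite hl_Or3; apply/existsP; exists h1; apply/hl_exP; exists i.
  rewrite /= hl_LtPos //= hX //= hY //= -EQ q1 q2 q3 /= hl_Or3.
  apply/existsP => -[h2] /hl_exP [i2].
  rewrite /= !hl_LtPos //= hl_or hX //= hY //= -EQ.
  case/and3P => r1 r2; rewrite q4 //.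
Qed.

Definition SumF (X Y : fam) : fam := fun h v s =>
  FXor (FXor (X h v s) (Y h v s)) (carryF X Y h v s).

Lemma SumF_ok X Y A B : fam_ok X (bitn A) -> fam_ok Y (bitn B) ->
  fam_ok (SumF X Y) (bitn (A + B)).
Proof.
move=> hX hY h v s env es ev.
by rewrite /SumF !hl_xor hX // hY // (hl_carry _ _ _ _ _ _ _ _ hX hY) // bitnD.
Qed.

Definition NotF (X : fam) : fam := fun h v s => FNot (X h v s).

Lemma NotF_ok X Z : Z < 2^(3*n) -> fam_ok X (bitn Z) ->
  fam_ok (NotF X) (bitn (2^(3*n) - 1 - Z)).
Proof.
move=> hZ hX h v s env es ev.
have hP : h * n + env v < 3 * n.
  have : h.+1 * n <= 3 * n by rewrite leq_mul2r ltn_ord orbT.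
  rewrite mulSn; lia.
by rewrite /NotF /= hX // bitn_compl.
Qed.

Definition SubF (X Y : fam) : fam := NotF (SumF (NotF X) Y).

Lemma SubF_ok X Y A B : A < 2^(3*n) -> B <= A ->
  fam_ok X (bitn A) -> fam_ok Y (bitn B) -> fam_ok (SubF X Y) (bitn (A - B)).
Proof.
move=> hA hB hX hY.
have := NotF_ok _ _ _ (SumF_ok _ _ _ _ (NotF_ok _ _ hA hX) hY).
have -> : 2 ^ (3 * n) - 1 - (2 ^ (3 * n) - 1 - A + B) = A - B by lia.
apply; lia.
Qed.

Definition FMax e : fo S := FNot (FEx (FLt e.+1 0)).
Definition FSucc x y : fo S := FAnd (FLt x y) (FNot (FEx (FAnd (FLt x.+1 0) (FLt 0 y.+1)))).
Fact PlusN_key : unit. Proof. by []. Qed.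
Definition PlusN i k p : fo S := locked_with PlusN_key (
  FEx (FEx (FEx (FAnd (FAdd p.+3 2 i.+3) (FAnd (FAdd 1 k.+3 0) (FAnd (FMax 0) (FSucc 1 2))))))).

Lemma hl_PlusN env i k p : env i < n -> env k < n -> env p < n ->
  hl env (PlusN i k p) = (env i + env k == n + env p).
Proof.
move=> li lk lp; rewrite /PlusN locked_withE.
apply/idP/eqP.
- case/existsP => a /existsP [a' /existsP [e]] /=.
  case/and5P => /eqP E1 /eqP E2 hmax Hlt hsucc.
  have ee : e = n.-1 :> nat.
    apply/eqP; rewrite eqn_leq -ltnS (_ : (n.-1).+1 = n); last lia.
    rewrite ltn_ord /=; apply/negP => Hc; apply/negP: hmax; rewrite negbK.
    have hn : n.-1 < n by lia.
    apply/existsP; exists (Ordinal hn) => /=; lia.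
  have ea : (a : nat) = a'.+1.
    apply/eqP; rewrite eqn_leq Hlt andbT; apply/negP => Hc; apply/negP: hsucc; rewrite negbK.
    have hz : a'.+1 < n by apply: (ltn_trans _ (ltn_ord a)); lia.
    apply/existsP; exists (Ordinal hz) => /=; lia.
  lia.
- move=> E.
  have h1 : env i - env p < n by lia.
  have h2 : env i - env p - 1 < n by lia.
  have h3 : n - 1 < n by lia.
  apply/existsP; exists (Ordinal h1); apply/existsP; exists (Ordinal h2);
    apply/existsP; exists (Ordinal h3) => /=.
  apply/and5P; split; try (apply/eqP; rewrite /=; lia);
   try (apply/negP => /existsP [z]; have := ltn_ord z; rewrite /=; lia).
Qed.

Definition ShiftEq (h : 'I_3) i k p : fo S :=
  if val h == 0 then FAdd i k p else if val h == 1 then PlusN i k p else FFalse.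

Lemma hl_ShiftEq env (h : 'I_3) i k p : env i < n -> env k < n -> env p < n ->
  hl env (ShiftEq h i k p) = (env i + env k == h * n + env p).
Proof.
move=> li lk lp; rewrite /ShiftEq.
case: h => [[|[|[|]]] hh] //=.
- by rewrite hl_PlusN // mul1n.
- symmetry; apply/eqP; lia.
Qed.

Definition Shifted (sy : S) : fam := fun h v s =>
  FEx (FAnd (FRel sy [:: 0]) (ShiftEq h 0 s.+1 v.+1)).

Lemma Shifted_ok sy Yv : k0 < n -> Yv < 2^n ->
  (forall a, a < n -> I sy [:: a] = bitn Yv a) ->
  fam_ok (Shifted sy) (bitn (2^k0 * Yv)).
Proof.
move=> hk hY hI h v s env es ev.
rewrite bitn_shift /Shifted hl_ex.
apply/existsP/idP.
- case=> i /=; rewrite hI // hl_ShiftEq //=; last by rewrite es.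
  rewrite es => /andP [b /eqP E].
  by rewrite -E leq_addl addnK.
- case/andP => le b.
  have hi : h * n + env v - k0 < n.
    rewrite ltnNge; apply/negP => Hc.
    move: b; rewrite bitn_small //.
    apply: (leq_trans hY); by rewrite leq_exp2l.
  exists (Ordinal hi) => /=; rewrite hI // b hl_ShiftEq //=; last by rewrite es.
  by rewrite es subnK.
Qed.

End FOLib.

Import GRing.Theory Num.Theory.

Section ColSec.
Definition i0 : 'I_3 := @Ordinal 3 0 isT.
Definition i1 : 'I_3 := @Ordinal 3 1 isT.
Definition i2 : 'I_3 := @Ordinal 3 2 isT.

Lemma I3_cases (P : 'I_3 -> Prop) : P i0 -> P i1 -> P i2 -> forall i, P i.
Proof.
move=> h0 h1 h2 [[|[|[|m]]] hm] //.
- by rewrite (_ : Ordinal hm = i0) //; apply: val_inj.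
- by rewrite (_ : Ordinal hm = i1) //; apply: val_inj.
- by rewrite (_ : Ordinal hm = i2) //; apply: val_inj.
Qed.

Local Open Scope ring_scope.

Lemma collin_iff d (p : 'I_3 -> 'I_d -> rat) :
  collinear d p <-> (0 < d)%N /\ forall j l,
    (p i1 j - p i0 j) * (p i2 l - p i0 l) = (p i1 l - p i0 l) * (p i2 j - p i0 j).
Proof.
split.
- move=> [a [v [[j0 vj0] H]]]; split; first by apply: leq_ltn_trans (ltn_ord j0).
  have [t0 E0] := H i0; have [t1 E1] := H i1; have [t2 E2] := H i2.
  move=> j l; rewrite !E0 !E1 !E2; ring.
- move=> [d0 H].
  pose u j := p i1 j - p i0 j; pose w j := p i2 j - p i0 j.
  case: (boolP [exists j, u j != 0]) => [/existsP [j0 hj0]|/existsPn hu].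
    exists (p i0), u; split; first by exists j0.
    apply: I3_cases.
    + by exists 0 => j; rewrite mul0r addr0.
    + by exists 1 => j; rewrite mul1r /u addrC subrK.
    + exists (w j0 / u j0) => j.
      have E : w j = w j0 / u j0 * u j.
        apply: (mulfI hj0).
        have := H j0 j; rewrite -/(u j0) -/(u j) -/(w j) -/(w j0) => ->.
        by field.
      by rewrite -E /w addrC subrK.
  have hu' : forall j, p i1 j = p i0 j.
    by move=> j; have := hu j; rewrite negbK subr_eq0 => /eqP.
  case: (boolP [exists j, w j != 0]) => [/existsP [j0 hj0]|/existsPn hw].
    exists (p i0), w; split; first by exists j0.
    apply: I3_cases.
    + by exists 0 => j; rewrite mul0r addr0.
    + by exists 0 => j; rewrite mul0r addr0 hu'.
    + by exists 1 => j; rewrite mul1r /w addrC subrK.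
  have hw' : forall j, p i2 j = p i0 j.
    by move=> j; have := hw j; rewrite negbK subr_eq0 => /eqP.
  exists (p i0), (fun _ => 1); split; first by exists (Ordinal d0); rewrite oner_neq0.
  apply: I3_cases; exists 0 => j; rewrite mul0r addr0 ?hu' ?hw' //.
Qed.

End ColSec.

Arguments SubF {S}. Arguments SumF {S}. Arguments Shifted {S}. Arguments FOr {S}.
Arguments FAll {S}. Arguments FIff {S}. Arguments FAndL {S T}. Arguments FFalse {S}.
Arguments NotF {S}. Arguments carryF {S}.

Section Prog.
Variable d : nat.
Definition cv := ('I_3 * 'I_d)%type.
Definition RI := option ('I_d * 'I_d * bool * 'I_3).
Definition K := #|{: RI}|.
Definition rid (x : RI) : 'I_K := enum_rank x.
Definition dec (r : 'I_K) : RI := enum_val r.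
Lemma decK x : dec (rid x) = x.
Proof. exact: enum_rankK. Qed.
Definition Sy := (('I_3 * 'I_d) + 'I_K)%type.

Definition terms (j l : 'I_d) (side : bool) : seq (cv * cv) :=
  if side then [:: ((i1,j),(i2,l)); ((i1,l),(i0,j)); ((i0,l),(i2,j))]
  else [:: ((i1,l),(i2,j)); ((i1,j),(i0,l)); ((i0,j),(i2,l))].

Fixpoint partner (x : cv) (ts : seq (cv * cv)) : option cv :=
  if ts is t :: ts' then
    if t.1 == x then Some t.2 else if t.2 == x then Some t.1 else partner x ts'
  else None.

Definition Stored j l side : fam Sy := fun h v s => FRel (inr (rid (Some (j,l,side,h)))) [:: v].

Definition NewBits (x : cv) j l side : fam Sy :=
  match partner x (terms j l side) with
  | None => Stored j l side
  | Some y => fun h v s =>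
     FOr (FAnd (FRel (inl x) [:: s]) (SubF (Stored j l side) (Shifted (inl y)) h v s))
         (FAnd (FNot (FRel (inl x) [:: s])) (SumF (Stored j l side) (Shifted (inl y)) h v s))
  end.

Definition queryF (x : cv) : fo Sy :=
  if d == 0 then FFalse else
  FAndL (enum {: 'I_d * 'I_d}) (fun jl => if jl.1 == jl.2 then FTrue else
    FAll (FAndL (enum 'I_3) (fun h =>
      FIff (NewBits x jl.1 jl.2 true h 0 1) (NewBits x jl.1 jl.2 false h 0 1)))).

Definition upd (i : 'I_3) (j0 : 'I_d) (r : 'I_K) : fo Sy :=
  match dec r with
  | None => queryF (i, j0)
  | Some (j, l, side, h) => NewBits (i, j0) j l side h 1 0
  end.

Definition ar (r : 'I_K) : nat := if dec r is Some _ then 1 else 0.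
Lemma ar_q : ar (rid None) = 0. Proof. by rewrite /ar decK. Qed.

Definition Prog : dynprog d := DynProg d K ar (rid None) ar_q upd.
End Prog.

Section Correct.
Variables (d n : nat).

Definition cval (inp : input d) (x : cv d) := Defs.coord d n inp x.1 x.2.
Definition tval (inp : input d) (ts : seq (cv d * cv d)) :=
  \sum_(t <- ts) cval inp t.1 * cval inp t.2.
Definition cvars (ts : seq (cv d * cv d)) := flatten [seq [:: t.1; t.2] | t <- ts].

Lemma cval_lt inp x : cval inp x < 2^n.
Proof. exact: sum_bits_lt. Qed.

Lemma cval_bit inp x a : a < n -> bitn (cval inp x) a = inp x.1 x.2 a.
Proof. by move=> ha; rewrite /cval /Defs.coord bitn_sum ha. Qed.

Section Flip.
Variables (c : change d) (inp : input d).
Hypothesis hk : c.2 < n.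
Let x : cv d := (c.1.1, c.1.2).
Let k := c.2.
Let inp' := flip d c inp.

Lemma cval_flip_ne y : y != x -> cval inp' y = cval inp y.
Proof.
move=> ne; apply: eq_bigr => m _; rewrite /inp' /flip.
case: y ne => a b ne /=.
suff -> : (a == c.1.1) && (b == c.1.2) = false by [].
by apply/negbTE; apply: contra ne => /andP [/eqP -> /eqP ->].
Qed.

Lemma cval_flip_eq :
  cval inp' x + inp x.1 x.2 k * 2^k = cval inp x + (~~ inp x.1 x.2 k) * 2^k.
Proof.
rewrite /cval /Defs.coord /= (bigD1 (Ordinal hk)) //= [in RHS](bigD1 (Ordinal hk)) //=.
rewrite /inp' /flip /= !eqxx /=.
rewrite [X in _ + X + _ = _](eq_bigr (fun m : 'I_n => inp c.1.1 c.1.2 m * 2^m)); last first.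
  move=> m hm.
  suff -> : (nat_of_ord m == c.2) = false by [].
  by apply/negbTE; apply: contra hm => /eqP E; apply/eqP/val_inj.
rewrite /k; lia.
Qed.

Lemma tval_notin ts : x \notin cvars ts -> tval inp' ts = tval inp ts.
Proof.
elim: ts => [|[a b] ts IH]; first by rewrite /tval !big_nil.
rewrite /cvars /= !inE negb_or => /andP [xa /norP [xb xts]].
rewrite /tval !big_cons /= -!/(tval _ ts) IH //.
by rewrite !cval_flip_ne // eq_sym.
Qed.

Lemma tval_flip ts : uniq (cvars ts) ->
  match partner d x ts with
  | Some y => y != x /\ tval inp' ts + inp x.1 x.2 k * (2^k * cval inp y)
                       = tval inp ts + (~~ inp x.1 x.2 k) * (2^k * cval inp y)
  | None => tval inp' ts = tval inp ts
  end.
Proof.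
elim: ts => [|[a b] ts IH]; first by rewrite /tval !big_nil.
rewrite /cvars /= -/(cvars ts) !inE negb_or => /andP [/andP [ab ats] /andP [bts uts]].
rewrite /tval !big_cons /= -!/(tval _ ts).
have E := cval_flip_eq.
case: eqP => [ax|/eqP ax].
  subst a; split; first by rewrite eq_sym.
  rewrite tval_notin // (cval_flip_ne b); last by rewrite eq_sym.
  move: E; set u := cval inp' x; set v := cval inp x; set B := inp x.1 x.2 k.
  move=> E; nia.
case: eqP => [bx|/eqP bx].
  subst b; split => //.
  rewrite tval_notin // (cval_flip_ne a) //.
  move: E; set u := cval inp' x; set v := cval inp x; set B := inp x.1 x.2 k.
  move=> E; nia.
have := IH uts; case: (partner d x ts) => [y [yx E2]|E2].
  split => //; rewrite !cval_flip_ne //; move: E2; rewrite /x /= => E2; lia.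
by rewrite E2 !cval_flip_ne.
Qed.

End Flip.

Lemma uniq_terms j l side : j != l -> uniq (cvars (terms d j l side)).
Proof.
move=> jl; case: side; rewrite /cvars /terms /= !inE !xpair_eqE /=
  ?[l == j]eq_sym ?(negbTE jl) //.
Qed.

End Correct.

Lemma prod_bound x y a : x < a -> y < a -> x * y <= a.-1 * a.-1.
Proof. by move=> hx hy; apply: leq_mul; lia. Qed.

Lemma cube_bound a : 0 < a -> 3 * (a.-1 * a.-1) < a * a * a.
Proof. case: a => //= b _; nia. Qed.

Lemma tval_lt d n inp j l side : tval d n inp (terms d j l side) < 2^(3*n).
Proof.
have -> : 2^(3*n) = 2^n * 2^n * 2^n by rewrite mulnC expnM !expnS expn0 muln1 mulnA.
have a0 : 0 < 2^n by rewrite expn_gt0.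
have := cube_bound _ a0.
have hc := cval_lt d n inp.
have pb : forall x y, cval d n inp x * cval d n inp y <= (2^n).-1 * (2^n).-1.
  by move=> x y; apply: prod_bound.
case: side; rewrite /tval /terms !big_cons big_nil /=;
  have := pb (i1, j) (i2, l); have := pb (i1, l) (i0, j); have := pb (i0, l) (i2, j);
  have := pb (i1, l) (i2, j); have := pb (i1, j) (i0, l); have := pb (i0, j) (i2, l);
  lia.
Qed.

Lemma hl_rel S n I env (r : S) xs : holds S n I env (FRel r xs) = I r (map env xs).
Proof. by []. Qed.

Section Step.
Variables (d n : nat).
Local Notation st_t := (state d (K d)).

Definition Inv (st : st_t) := forall j l side (h : 'I_3) p, j != l -> p < n ->
  st_aux d (K d) st (rid d (Some (j,l,side,h))) [:: p]
  = bitn (tval d n (st_inp d (K d) st) (terms d j l side)) (h * n + p).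

Lemma Stored_ok st k j l side : Inv st -> j != l ->
  fam_ok (Sy d) n (interp d (K d) st) k (Stored d j l side)
    (bitn (tval d n (st_inp d (K d) st) (terms d j l side))).
Proof. by move=> hI jl h v s env es ev; rewrite /Stored hl_rel /= hI. Qed.

Lemma Shifted_inl_ok st k y : k < n ->
  fam_ok (Sy d) n (interp d (K d) st) k (Shifted (inl y))
    (bitn (2^k * cval d n (st_inp d (K d) st) y)).
Proof.
move=> hk; apply: Shifted_ok => //; first exact: cval_lt.
by move=> a ha; rewrite /= cval_bit.
Qed.

Lemma NewBits_ok st (c : change d) j l side : Inv st -> j != l -> c.2 < n ->
  fam_ok (Sy d) n (interp d (K d) st) c.2 (NewBits d (c.1.1, c.1.2) j l side)
    (bitn (tval d n (flip d c (st_inp d (K d) st)) (terms d j l side))).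
Proof.
move=> hI jl hk.
have T := tval_flip d n c (st_inp d (K d) st) hk _ (uniq_terms d j l side jl).
rewrite /NewBits; case: (partner _ _ _) T => [y [yx E]|E]; last first.
  by rewrite E; exact: Stored_ok.
move=> h v s env es ev.
have hS := Stored_ok st c.2 j l side hI jl.
have hY := Shifted_inl_ok st c.2 y hk.
have hA := tval_lt d n (st_inp d (K d) st) j l side.
rewrite /= in E.
case eb: (st_inp d (K d) st c.1.1 c.1.2 c.2) in E; rewrite /= in E.
- have hBA : 2 ^ c.2 * cval d n (st_inp d (K d) st) y <= tval d n (st_inp d (K d) st) (terms d j l side) by lia.
  rewrite hl_or !hl_and (SubF_ok _ _ _ _ _ _ _ _ hA hBA hS hY h v s env es ev) hl_not.
  rewrite !hl_rel /= es eb /= orbF; congr bitn; lia.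
- rewrite hl_or !hl_and (SumF_ok _ _ _ _ _ _ _ _ hS hY h v s env es ev) hl_not.
  rewrite !hl_rel /= es eb /=; congr bitn; lia.
Qed.

End Step.

Section Main.
Variables (d n : nat).
Local Notation st_t := (state d (K d)).

Lemma step_aux (st : st_t) c r t :
  st_aux d (K d) (step d (Prog d) n st c) r t =
  [&& size t == ar d r, all (fun a => a < n) t &
      holds _ n (interp d (K d) st) (fun v => nth 0 (c.2 :: t) v) (upd d c.1.1 c.1.2 r)].
Proof. by []. Qed.

Lemma step_inp (st : st_t) c :
  st_inp d (K d) (step d (Prog d) n st c) = flip d c (st_inp d (K d) st).
Proof. by []. Qed.

Lemma upd_some i j0 j l side h :
  upd d i j0 (rid d (Some (j,l,side,h))) = NewBits d (i,j0) j l side h 1 0.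
Proof. by rewrite /upd decK. Qed.

Lemma upd_none i j0 : upd d i j0 (rid d None) = queryF d (i,j0).
Proof. by rewrite /upd decK. Qed.

Lemma Inv_step (st : st_t) c : Inv d n st -> c.2 < n -> Inv d n (step d (Prog d) n st c).
Proof.
move=> hI hk j l side h p jl hp.
rewrite step_aux upd_some.
rewrite (NewBits_ok d n st c j l side hI jl hk h 1 0 (fun v => nth 0 (c.2 :: [:: p]) v) erefl hp).
by rewrite /ar decK /= hp.
Qed.

Lemma Inv_foldl (st : st_t) cs : Inv d n st -> all (fun c : change d => c.2 < n) cs ->
  Inv d n (foldl (step d (Prog d) n) st cs).
Proof.
elim: cs st => [//|c cs IH] st hI /= /andP [hk hcs].
by apply: IH => //; apply: Inv_step.
Qed.

Lemma Inv_init : Inv d n (init_state d (K d)).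
Proof.
move=> j l side h p jl hp /=.
rewrite /tval big1 ?bitn0 // => t _.
by rewrite /cval /Defs.coord big1 // => m _.
Qed.

Lemma query_step (st : st_t) c : Inv d n st -> c.2 < n ->
  query_answer d (Prog d) (step d (Prog d) n st c) =
  (0 < d) && [forall j, forall l, (j != l) ==>
     (tval d n (flip d c (st_inp d (K d) st)) (terms d j l true) ==
      tval d n (flip d c (st_inp d (K d) st)) (terms d j l false))].
Proof.
move=> hI hk.
rewrite /query_answer step_aux upd_none /ar decK /= /queryF.
case: eqP => [d0|/eqP d0]; first by subst d.
rewrite lt0n d0 /= hl_AndL.
set env := (fun v => nth 0 [:: c.2] v).
transitivity (all (fun jl : 'I_d * 'I_d => (jl.1 == jl.2) ||
   (tval d n (flip d c (st_inp d (K d) st)) (terms d jl.1 jl.2 true) ==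
    tval d n (flip d c (st_inp d (K d) st)) (terms d jl.1 jl.2 false)))
   (enum {: 'I_d * 'I_d})).
  apply: eq_all => -[j l] /=.
  case: eqP => [//|/eqP jl] /=.
  rewrite hl_all.
  have NB := fun side h (p : 'I_n) =>
    NewBits_ok d n st c j l side hI jl hk h 0 1 (ext env p) erefl (ltn_ord p).
  apply/forallP/eqP.
  - move=> H; apply: (bitn_inj (3 * n)); [exact: (tval_lt d n _ j l true)|exact: (tval_lt d n _ j l false)|].
    move=> P hP.
    have [h [p E]] := pos_decomp n P hP.
    have := H p; rewrite hl_AndL => /allP /(_ h (mem_enum _ h)).
    by rewrite hl_iff !NB /= E => /eqP.
  - move=> EQ p; rewrite hl_AndL; apply/allP => h _.
    by rewrite hl_iff !NB EQ.
apply/allP/forallP.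
- move=> H j; apply/forallP => l; apply/implyP => jl.
  by have := H (j, l) (mem_enum _ _); rewrite /= (negbTE jl).
- move=> H [j l] _ /=; have := forallP (H j) l.
  by case: eqP.
Qed.

End Main.

Lemma eqdiff (R : zmodType) (x y u v : R) : (x - y = u - v)%R -> (x == y) = (u == v).
Proof. by move=> E; rewrite -subr_eq0 E subr_eq0. Qed.

Lemma cross_eq d n inp j l :
  (tval d n inp (terms d j l true) == tval d n inp (terms d j l false)) =
  (((points d n inp i1 j - points d n inp i0 j) * (points d n inp i2 l - points d n inp i0 l) ==
   (points d n inp i1 l - points d n inp i0 l) * (points d n inp i2 j - points d n inp i0 j))%R).
Proof.
rewrite -(@eqr_nat rat) /tval /terms !big_cons !big_nil /= /points /cval /=.
rewrite !natrD !natrM.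
apply: eqdiff; ring.
Qed.

Theorem lemma14 : forall d : nat, exists P : dynprog d, maintains_collinearity d P.
Proof.
move=> d; exists (Prog d) => n cs csn0 hall.
move: csn0 hall; case/lastP: cs => [//|cs c] _; rewrite all_rcons => /andP [hk hall].
rewrite /run foldl_rcons.
have hI := Inv_foldl d n _ cs (Inv_init d n) hall.
rewrite query_step // step_inp collin_iff.
split.
- case/andP => d0 /forallP H; split => // j l.
  case: (eqVneq j l) => [->|jl]; first by rewrite mulrC.
  apply/eqP; rewrite -cross_eq.
  by have := forallP (H j) l; rewrite jl.
- move=> [d0 H]; rewrite d0 /=; apply/forallP => j; apply/forallP => l.
  by apply/implyP => _; rewrite cross_eq H.
Qed.
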